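(* Let $G \in \mathbf{Bl}(\mathbf{k},\varphi)$ and let $\mathcal{D}$ be a maximum dissociation set of $G$. Then $G$ is not a graph with maximal spectral radius in $\mathbf{Bl}(\mathbf{k},\varphi)$ if any one of the following holds: (i) $G$ has a block $B$ with $|B\cap\mathcal{D}|=0$; (ii) $\mathcal{D}$ contains a cut vertex of $G$; (iii) $G$ has two adjacent blocks $B_1,B_2$ with $|B_1\cap\mathcal{D}|=|B_2\cap\mathcal{D}|=1$.
   Context: All graphs are finite, simple and connected. A block of $G$ is a maximal connected subgraph without a cut vertex; two blocks are adjacent if they share a cut vertex. A block graph is a connected graph each of whose blocks is a complete graph. A set $\mathcal{D}\subseteq V(G)$ is a dissociation set if the subgraph induced by $\mathcal{D}$ has maximum degree at most $1$; the dissociation number $\varphi(G)$ is the maximum size of a dissociation set, and a maximum dissociation set is one of size $\varphi(G)$ (the paper calls it a ''maximal dissociation set''). $\mathbf{Bl}(\mathbf{k},\varphi)$ denotes the class of block graphs on $\mathbf{k}$ vertices with dissociation number $\varphi$. $\rho(G)$ denotes the spectral radius (largest eigenvalue) of the adjacency matrix of $G$. A graph $\widehat G\in\mathbf{Bl}(\mathbf{k},\varphi)$ is called a graph with maximal spectral radius in $\mathbf{Bl}(\mathbf{k},\varphi)$ if $\rho(G)\le\rho(\widehat G)$ for all $G\in\mathbf{Bl}(\mathbf{k},\varphi)$. *)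

(* Defs.v *)
From HB Require Import structures.
From mathcomp Require Import all_boot all_order all_algebra.
From mathcomp Require Import boolp classical_sets reals.
Set Implicit Arguments. Unset Strict Implicit. Unset Printing Implicit Defensive.
Import Order.TTheory GRing.Theory Num.Theory.

Section Graphs.
Variable T : finType.
Implicit Types (g : rel T) (S D B : {set T}) (v : T).

Definition simple_graph g := irreflexive g /\ symmetric g.

Definition induced g S : rel T := fun x y => [&& x \in S, y \in S & g x y].

Definition connected_on g S :=
  forall x y, x \in S -> y \in S -> connect (induced g S) x y.

Definition connected_graph g := connected_on g [set: T].

Definition cut_vertex g v := ~ connected_on g ([set: T] :\ v).

Definition biconn_set g S :=
  (0 < #|S|)%N /\ connected_on g S /\ forall v, v \in S -> connected_on g (S :\ v).

Definition block g B :=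
  biconn_set g B /\ forall S, B \subset S -> biconn_set g S -> S = B.

Definition adjacent_blocks g B1 B2 :=
  [/\ block g B1, block g B2, B1 != B2 &
      exists v, [/\ v \in B1, v \in B2 & cut_vertex g v]].

Definition block_graph g :=
  connected_graph g /\
  forall B, block g B -> forall x y, x \in B -> y \in B -> x != y -> g x y.

Definition dissociation g D : bool :=
  [forall x in D, #|[set y in D | g x y]| <= 1].

Definition diss_number g : nat := \max_(D : {set T} | dissociation g D) #|D|.

Definition max_dissociation_set g D := dissociation g D /\ #|D| = diss_number g.

Definition adj_mx (R : realType) g : 'M[R]_#|T| :=
  \matrix_(i, j) (g (enum_val i) (enum_val j))%:R%R.

Definition spec_rad (R : realType) g : R :=
  sup [set l : R | eigenvalue (adj_mx R g) l].

End Graphs.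

Definition Bl (k phi : nat) (g : rel 'I_k) :=
  [/\ simple_graph g, block_graph g & diss_number g = phi].

Definition max_spectral_in_Bl (R : realType) (k phi : nat) (gh : rel 'I_k) :=
  Bl phi gh /\ forall g : rel 'I_k, Bl phi g -> (spec_rad R g <= spec_rad R gh)%R.

(* Main.v *)
Require Import Defs.
From HB Require Import structures.
From mathcomp Require Import all_boot all_order all_algebra.
From mathcomp Require Import boolp.
From mathcomp Require Import zify.
Set Implicit Arguments. Unset Strict Implicit. Unset Printing Implicit Defensive.


Section Comb.
Variable T : finType.
Variable g : rel T.
Hypothesis gs : symmetric g.
Hypothesis gi : irreflexive g.

Lemma induced_sym (e : rel T) (S : {set T}) : symmetric e -> symmetric (induced e S).
Proof. by move=> es x y; rewrite /induced es andbCA. Qed.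

Lemma conn_sym (e : rel T) (S : {set T}) x y : symmetric e ->
  connect (induced e S) x y -> connect (induced e S) y x.
Proof. by move=> es; rewrite (sym_connect_sym (induced_sym S es)). Qed.

Lemma conn_mono (e : rel T) (S S' : {set T}) x y : S \subset S' ->
  connect (induced e S) x y -> connect (induced e S') x y.
Proof.
move=> sub; apply: connect_sub => a b /and3P [aS bS eab].
by apply: connect1; rewrite /induced (subsetP sub a aS) (subsetP sub b bS).
Qed.

Lemma path_conn (e : rel T) (S : {set T}) x p : path e x p -> (forall z, z \in x :: p -> z \in S) ->
  connect (induced e S) x (last x p).
Proof.
elim: p x => [|y p IH] x /=; first by move=> _ _; exact: connect0.
move=> /andP [exy pp] H; apply: connect_trans (IH y pp _).
  apply: connect1; rewrite /induced exy !H ?mem_head ?inE ?eqxx ?orbT //.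
by move=> z zp; apply: H; rewrite inE zp orbT.
Qed.

Lemma conn_root (S : {set T}) r : (forall x, x \in S -> connect (induced g S) r x) -> connected_on g S.
Proof.
move=> H x y xS yS; apply: connect_trans (H y yS).
by apply: conn_sym => //; apply: H.
Qed.

Lemma path_induced_in (e : rel T) (S : {set T}) x p : path (induced e S) x p ->
  forall z, z \in p -> z \in S.
Proof.
elim: p x => //= y p IH x /andP [/and3P [_ yS _] pp] z.
by rewrite inE => /orP [/eqP -> //|]; apply: IH pp z.
Qed.

Lemma path_induced_sub (e : rel T) (S : {set T}) x p : path (induced e S) x p -> path e x p.
Proof. by apply: sub_path => a b /and3P []. Qed.


Lemma biconn_in_block (S : {set T}) : biconn_set g S -> exists B, block g B /\ S \subset B.
Proof.
have [m] := ubnP #|~: S|; elim: m S => // m IH S Hm bS.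
case: (pselect (forall S' : {set T}, S \subset S' -> biconn_set g S' -> S' = S)) => [H|H].
  exists S; split; [by split | exact: subxx].
move/existsNP: H => [S' /not_implyP [sub /not_implyP [bS' neq]]].
have [B [bB sB]] : exists B, block g B /\ S' \subset B.
  apply: IH bS'; rewrite ltnS in Hm; apply: leq_trans Hm.
  have pr : S \proper S'.
    by rewrite properEneq sub andbT; apply/eqP => E; apply: neq; exact: esym E.
  have := proper_card pr; rewrite (cardsCs S) (cardsCs S') => h.
  have h2 : (#|S'| <= #|T|)%N by exact: max_card.
  lia.
by exists B; split => //; apply: subset_trans sub sB.
Qed.

Lemma edge_block x y : g x y -> exists B, [/\ block g B, x \in B & y \in B].
Proof.
move=> gxy.
have xy : x != y by apply: contraTneq gxy => ->; rewrite gi.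
have [B [bB sB]] : exists B, block g B /\ [set x; y] \subset B.
  apply: biconn_in_block; split; first by apply/card_gt0P; exists x; rewrite !inE eqxx.
  split.
    apply: (@conn_root _ x) => z; rewrite !inE => /orP [/eqP ->|/eqP ->].
      exact: connect0.
    by apply: connect1; rewrite /induced !inE !eqxx orbT gxy.
  move=> u; rewrite !inE => /orP [] /eqP -> a b; rewrite !inE.
    move=> /andP [ax /orP [/eqP ax'|/eqP ->]]; first by rewrite ax' eqxx in ax.
    move=> /andP [bx' /orP [/eqP bx|/eqP ->]]; first by rewrite bx eqxx in bx'.
    exact: connect0.
  move=> /andP [ay /orP [/eqP ->|/eqP ay']]; last by rewrite ay' eqxx in ay.
  move=> /andP [by1 /orP [/eqP ->|/eqP by']]; last by rewrite by' eqxx in by1.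
  exact: connect0.
by exists B; split => //; apply: (subsetP sB); rewrite !inE eqxx ?orbT.
Qed.


Lemma ear_pre a p1 y p2 b (Z : {set T}) : path g a (p1 ++ y :: rcons p2 b) ->
  (forall z, z \in a :: rcons p1 y -> z \in Z) -> connect (induced g Z) a y.
Proof.
rewrite cat_path => /andP [h1 /= /andP [h2 _]] H.
have pp : path g a (rcons p1 y) by rewrite rcons_path h1 h2.
by have := path_conn pp H; rewrite last_rcons.
Qed.

Lemma ear_suf a p1 y p2 b (Z : {set T}) : path g a (p1 ++ y :: rcons p2 b) ->
  (forall z, z \in y :: rcons p2 b -> z \in Z) -> connect (induced g Z) y b.
Proof.
rewrite cat_path => /andP [_ /= /andP [_ h]] H.
by have := path_conn h H; rewrite last_rcons.
Qed.

Lemma ear (X : {set T}) a b s : biconn_set g X -> a \in X -> b \in X -> a != b ->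
  uniq s -> (forall z, z \in s -> z \notin X) -> path g a (rcons s b) ->
  biconn_set g (X :|: [set z in s]).
Proof.
move=> [_ [hX hXu]] aX bX ab us sX ps.
have XY : X \subset X :|: [set z in s] by apply/subsetP => z zX; rewrite !inE zX.
split; first by apply/card_gt0P; exists a; rewrite !inE aX.
split.
  apply: (@conn_root _ a) => z; rewrite !inE => /orP [zX|zs].
    by apply: conn_mono XY _; apply: hX.
  case/splitPr: zs ps us sX => p1 p2 ps _ _; rewrite rcons_cat /= in ps.
  apply: ear_pre ps _ => w; rewrite inE mem_rcons !inE => /orP [/eqP ->|]; first by rewrite aX.
  by rewrite mem_cat inE => /orP [->|->]; rewrite !orbT.
move=> u; rewrite !inE => uY.
have XuZ : X :\ u \subset (X :|: [set z in s]) :\ u.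
  by apply/subsetP => z; rewrite !inE => /andP [-> ->].
case uX: (u \in X).
  have [ua|ua] := eqVneq u a.
    apply: (@conn_root _ b) => z; rewrite !inE => /andP [zu /orP [zX|zs]].
      apply: conn_mono XuZ _; apply: hXu; rewrite ?inE ?zu ?zX ?bX ?andbT //.
      by rewrite ua eq_sym.
    apply: conn_sym => //.
    case/splitPr: zs ps us sX => p1 p2 ps _ sX; rewrite rcons_cat /= in ps.
    apply: ear_suf ps _ => w; rewrite inE mem_rcons !inE => /orP [/eqP ->|].
      by rewrite zu mem_cat inE eqxx /= !orbT.
    move=> /orP [/eqP ->|wp2]; first by rewrite bX ua eq_sym ab.
    have : w \in p1 ++ z :: p2 by rewrite mem_cat inE wp2 !orbT.
    move=> ws; rewrite ws orbT andbT; apply: contraTneq ws => ->.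
    by apply/negP => /sX; rewrite uX.
  apply: (@conn_root _ a) => z; rewrite !inE => /andP [zu /orP [zX|zs]].
    apply: conn_mono XuZ _; apply: hXu; rewrite ?inE ?zu ?zX ?aX ?andbT //.
    by rewrite eq_sym.
  case/splitPr: zs ps us sX => p1 p2 ps _ sX; rewrite rcons_cat /= in ps.
  apply: ear_pre ps _ => w; rewrite inE mem_rcons !inE => /orP [/eqP ->|].
    by rewrite aX eq_sym ua.
  move=> /orP [/eqP ->|wp1]; first by rewrite zu mem_cat inE eqxx /= !orbT.
  have : w \in p1 ++ z :: p2 by rewrite mem_cat wp1.
  move=> ws; rewrite ws orbT andbT; apply: contraTneq ws => ->.
  by apply/negP => /sX; rewrite uX.
move: uY; rewrite uX /= => us'.
have XZ : X \subset (X :|: [set z in s]) :\ u.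
  by apply/subsetP => z zX; rewrite !inE zX andbT; apply: contraTneq zX => ->; rewrite uX.
apply: (@conn_root _ a) => z; rewrite !inE => /andP [zu /orP [zX|zs]].
  by apply: conn_mono XZ _; apply: hX.
case/splitPr: zs ps us sX us' XZ => p1 p2 ps us sX us' XZ; rewrite rcons_cat /= in ps.
have nX w : w \in p1 ++ z :: p2 -> w \notin X by move=> /sX.
case up1: (u \in p1).
  have up2 : u \notin p2.
    move: us; rewrite cat_uniq => /and3P [_ /hasPn H _].
    by apply/negP => up2; have := H u; rewrite inE up2 orbT => /(_ isT); rewrite up1.
  apply: connect_trans (conn_mono XZ (hX a b aX bX)) _.
  apply: conn_sym => //; apply: ear_suf ps _ => w; rewrite inE mem_rcons !inE.
  move=> /orP [/eqP ->|]; first by rewrite zu mem_cat inE eqxx /= !orbT.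
  move=> /orP [/eqP ->|wp2]; first by rewrite bX andbT; apply: contraTneq bX => ->; rewrite nX // mem_cat up1.
  rewrite mem_cat inE wp2 !orbT andbT; apply: contraTneq wp2 => ->; exact: up2.
apply: ear_pre ps _ => w; rewrite inE mem_rcons !inE => /orP [/eqP ->|].
  by rewrite aX andbT; apply: contraTneq aX => ->; rewrite uX.
move=> /orP [/eqP ->|wp1]; first by rewrite zu mem_cat inE eqxx /= !orbT.
by rewrite mem_cat wp1 orbT andbT; apply: contraTneq wp1 => ->; rewrite up1.
Qed.


Lemma no_ear (X : {set T}) a b s : block g X -> a \in X -> b \in X -> a != b ->
  s != [::] -> uniq s -> (forall z, z \in s -> z \notin X) -> path g a (rcons s b) -> False.
Proof.
move=> [bX mX] aX bX' ab sn us sX ps.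
have bY := ear bX aX bX' ab us sX ps.
have XY : X \subset X :|: [set z in s] by apply/subsetP => z zX; rewrite !inE zX.
have E := mX _ XY bY.
case: s sn us sX ps E bY XY => // z s _ _ sX _ E _ _.
have zY : z \in X :|: [set z0 in z :: s] by rewrite !inE eqxx orbT.
by rewrite E in zY; have := sX z (mem_head _ _); rewrite zY.
Qed.

Lemma clique (B : {set T}) x y : block_graph g -> block g B -> x \in B -> y \in B -> x != y -> g x y.
Proof. by move=> [_ H] bB; apply: H. Qed.


Lemma extract (e : rel T) (K S : {set T}) w p : (forall y z, y \notin K -> e y z -> g y z) ->
  w \notin K -> path (induced e S) w p -> last w p \in K ->
  exists x c, [/\ c \in K, c \in S, x \notin K, connect (induced g (~: K)) w x & g x c].
Proof.
move=> H; elim: p w => [|y p IH] w wK /=; first by rewrite (negbTE wK).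
move=> /andP [/and3P [wS yS ewy] pp] lK.
have gwy : g w y by apply: H.
case yK: (y \in K).
  by exists w, y; split => //; exact: connect0.
have [x [c [cK cS xK cwx gxc]]] := IH y (negbT yK) pp lK.
exists x, c; split => //; apply: connect_trans cwx.
by apply: connect1; rewrite /induced !inE wK yK gwy.
Qed.

Section Merge.
Hypothesis hb : block_graph g.
Variables (B1 B2 : {set T}) (v : T).
Hypotheses (bB1 : block g B1) (bB2 : block g B2) (nB : B1 != B2)
  (vB1 : v \in B1) (vB2 : v \in B2).

Definition C := B1 :|: B2.
Definition gm : rel T := fun x y => g x y || [&& x != y, x \in C & y \in C].

Lemma notsub (X Y : {set T}) : block g X -> block g Y -> X != Y -> ~~ (X \subset Y).
Proof.
move=> [_ mX] [bY _] XY; apply/negP => sub.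
by have := mX _ sub bY => E; rewrite E eqxx in XY.
Qed.

Lemma no_cross x y : x \in B1 -> x \notin B2 -> y \in B2 -> y \notin B1 -> ~~ g x y.
Proof.
move=> x1 x2 y2 y1; apply/negP => gxy.
apply: (@no_ear B1 x v [:: y]) => //.
- by apply: contraNneq x2 => ->.
- by move=> z; rewrite inE => /eqP ->.
rewrite /= gxy /= andbT; apply: (clique hb bB2) => //.
by apply: contraNneq y1 => ->.
Qed.

Lemma new_edge x y : gm x y -> ~~ g x y ->
  [/\ x \in B1, x \notin B2, y \in B2 & y \notin B1] \/
  [/\ x \in B2, x \notin B1, y \in B1 & y \notin B2].
Proof.
rewrite /gm => /orP [->//|/and3P [xy]]; rewrite !inE => xC yC ngxy.
case x1: (x \in B1); case x2: (x \in B2); case y1: (y \in B1); case y2: (y \in B2);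
  move: xC yC; rewrite ?x1 ?x2 ?y1 ?y2 //= => _ _; try by [left|right].
all: first [by rewrite (clique hb bB1 x1 y1 xy) in ngxy | by rewrite (clique hb bB2 x2 y2 xy) in ngxy].
Qed.


Lemma gm_simple : simple_graph gm.
Proof.
split; first by move=> x; rewrite /gm gi eqxx.
by move=> x y; rewrite /gm gs eq_sym (andbC (y \in C)).
Qed.

Lemma gm_sub x y : g x y -> gm x y.
Proof. by rewrite /gm => ->. Qed.

Lemma gm_strict : exists x y, gm x y && ~~ g x y.
Proof.
have [x x1 x2] := subsetPn (notsub bB1 bB2 nB).
have nB' : B2 != B1 by rewrite eq_sym.
have [y y2 y1] := subsetPn (notsub bB2 bB1 nB').
exists x, y; rewrite no_cross // andbT /gm; apply/orP; right.
rewrite !inE x1 y2 orbT andbT /= andbT; by apply: contraNneq x2 => ->.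
Qed.

Lemma star x x' c c' : x \notin C -> connect (induced g (~: C)) x x' -> g x c -> g x' c' ->
  c \in C -> c' \in C -> c != c' -> False.
Proof.
move=> xC /connectP [p pp ->] gxc; case/shortenP: pp => p' pp' up' _ gxc' cC c'C cc'.
set s0 := x :: p'.
have s0C z : z \in s0 -> z \notin C.
  rewrite inE => /orP [/eqP -> //|zp].
  by have := path_induced_in pp' zp; rewrite inE.
have s01 z : z \in s0 -> z \notin B1 by move=> /s0C; rewrite !inE negb_or => /andP [].
have s02 z : z \in s0 -> z \notin B2 by move=> /s0C; rewrite !inE negb_or => /andP [].
have ps0 : path g c (rcons s0 c').
  by rewrite /= rcons_path (path_induced_sub pp') gxc' andbT gs gxc.
have c's0 : c' \notin s0 by apply/negP => /s0C; rewrite c'C.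
have cross (X Y : {set T}) : block g X -> block g Y -> v \in X -> v \in Y ->
    (forall z, z \in s0 -> z \notin X) -> c \in X -> c \notin Y -> c' \in Y -> c' \notin X -> False.
  move=> bX bY vX vY sX cX cY c'Y c'X.
  apply: (@no_ear X c v (rcons s0 c')) => //.
  - by apply: contraNneq cY => ->.
  - by rewrite rcons_uniq c's0.
  - by move=> z; rewrite mem_rcons inE => /orP [/eqP -> //|]; apply: sX.
  rewrite rcons_path ps0 /= last_rcons; apply: (clique hb bY) => //.
  by apply: contraNneq c'X => ->.
have same (X : {set T}) : block g X -> (forall z, z \in s0 -> z \notin X) -> c \in X -> c' \in X -> False.
  move=> bX sX cX c'X; apply: (@no_ear X c c' s0) => //.
move: cC c'C; rewrite !inE.
case c1: (c \in B1); case c2: (c \in B2); case c'1: (c' \in B1); case c'2: (c' \in B2) => //= _ _.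
all: first [ exact: (same B1 bB1 s01 c1 c'1) | exact: (same B2 bB2 s02 c2 c'2)
           | exact: (cross B1 B2 bB1 bB2 vB1 vB2 s01 c1 (negbT c2) c'2 (negbT c'1))
           | exact: (cross B2 B1 bB2 bB1 vB2 vB1 s02 c2 (negbT c1) c'1 (negbT c'2)) ].
Qed.


Lemma gm_noC y z : y \notin C -> gm y z -> g y z.
Proof. by rewrite /gm => /negbTE yC /orP [//|/and3P [_]]; rewrite yC. Qed.

Lemma gm_block : block_graph gm.
Proof.
split.
  move=> x y xT yT; apply: connect_sub (hb.1 x y xT yT) => a b /and3P [aT bT gab].
  by apply: connect1; rewrite /induced aT bT gm_sub.
move=> B [[_ [cB cBu]] mB] x y xB yB xy.
case: (pselect (exists c1 c2, [/\ c1 \in B, c2 \in B, c1 \in C, c2 \in C & c1 != c2])).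
  move=> [c1 [c2 [c1B c2B c1C c2C c12]]].
  case: (pselect (exists w, w \in B /\ w \notin C)); last first.
    move=> H; rewrite /gm xy /=; apply/orP; right.
    by apply/andP; split; apply/negPn/negP => nC; apply: H; [exists x | exists y].
  move=> [w [wB wC]]; exfalso.
  have /connectP [p pp lp] := cB w c1 wB c1B.
  have l1 : last w p \in C by rewrite -lp.
  have [x1 [c [cC cS x1C wx1 gx1c]]] := extract gm_noC wC pp l1.
  pose c' := if c1 == c then c2 else c1.
  have [c'c c'B c'C] : [/\ c' != c, c' \in B & c' \in C].
    rewrite /c'; have [e|ne] := eqVneq c1 c; last by [].
    by rewrite -e eq_sym.
  have wc : w != c by apply: contraNneq wC => ->.
  have wBc : w \in B :\ c by rewrite !inE wc wB.
  have c'Bc : c' \in B :\ c by rewrite !inE c'c c'B.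
  have /connectP [p2 pp2 lp2] := cBu c cS w c' wBc c'Bc.
  have l2 : last w p2 \in C by rewrite -lp2.
  have [x2 [c2' [c2C' c2S x2C wx2 gx2c]]] := extract gm_noC wC pp2 l2.
  have cc2 : c != c2' by move: c2S; rewrite !inE eq_sym => /andP [].
  apply: (star x1C _ gx1c gx2c cC c2C' cc2).
  by apply: connect_trans wx2; apply: conn_sym.
move=> H.
have eqi (S : {set T}) : S \subset B -> induced gm S =2 induced g S.
  move=> sub a b; rewrite /induced /gm.
  case aS: (a \in S); case bS: (b \in S) => //=.
  case: (g a b) => //=; apply/negP => /and3P [ab aC bC]; apply: H.
  by exists a, b; split => //; apply: (subsetP sub).
have bg : biconn_set g B.
  split; first by apply/card_gt0P; exists x.
  split.
    by move=> a b aB bB; rewrite -(eq_connect (eqi _ (subxx _))); apply: cB.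
  move=> u uB a b aB bB; rewrite -(eq_connect (eqi _ _)); first by apply: cBu.
  by apply/subsetP => z; rewrite !inE => /andP [].
have [B0 [bB0 sB0]] := biconn_in_block bg.
by apply: gm_sub; apply: (clique hb bB0) => //; apply: (subsetP sB0).
Qed.

End Merge.


Lemma diss_sub (g1 g2 : rel T) (S : {set T}) : (forall x y, g1 x y -> g2 x y) ->
  dissociation g2 S -> dissociation g1 S.
Proof.
move=> sub /forallP H; apply/forallP => x; apply/implyP => xS.
have := implyP (H x) xS; apply: leq_trans; apply: subset_leq_card.
by apply/subsetP => y; rewrite !inE => /andP [-> /sub ->].
Qed.

Lemma diss_num_eq (g2 : rel T) (D : {set T}) : (forall x y, g x y -> g2 x y) ->
  dissociation g2 D -> #|D| = diss_number g -> diss_number g2 = diss_number g.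
Proof.
move=> sub dD cD; apply/eqP; rewrite eqn_leq; apply/andP; split.
  apply/bigmax_leqP => S dS; apply: (@leq_bigmax_cond _ (fun S => dissociation g S) (fun S => #|S|)).
  exact: diss_sub dS.
rewrite -cD; exact: (@leq_bigmax_cond _ (fun S => dissociation g2 S) (fun S => #|S|)).
Qed.

Lemma diss_le1 (D : {set T}) x y z : dissociation g D -> x \in D -> y \in D -> z \in D ->
  g x y -> g x z -> y = z.
Proof.
move=> /forallP /(_ x) /implyP H xD yD zD gxy gxz.
have /card_le1_eqP E := H xD; apply: E; rewrite inE ?yD ?zD //.
Qed.

Lemma diss_of (g2 : rel T) (D : {set T}) :
  (forall x y z, x \in D -> y \in D -> z \in D -> g2 x y -> g2 x z -> y = z) -> dissociation g2 D.
Proof.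
move=> H; apply/forallP => x; apply/implyP => xD; apply/card_le1_eqP => y z.
by rewrite !inE => /andP [yD gxy] /andP [zD gxz]; apply: (H x).
Qed.

Lemma diss_ge1 (D : {set T}) (x : T) : #|D| = diss_number g -> exists d, d \in D.
Proof.
move=> cD; apply/set0Pn; rewrite -card_gt0 cD.
have d1 : dissociation g [set x].
  apply/forallP => y; apply/implyP => _.
  have sub : [set z in [set x] | g y z] \subset [set x].
    by apply/subsetP => z; rewrite inE => /andP [].
  by apply: leq_trans (subset_leq_card sub) _; rewrite cards1.
by apply: leq_trans (@leq_bigmax_cond _ (fun S => dissociation g S) (fun S => #|S|) _ d1); rewrite cards1.
Qed.

End Comb.

Section Cases.
Variable T : finType.
Variable g : rel T.
Hypothesis gs : symmetric g.
Hypothesis gi : irreflexive g.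
Hypothesis hb : block_graph g.
Variable D : {set T}.
Hypothesis dD : dissociation g D.

Definition good := exists B1 B2 v, [/\ block g B1, block g B2, B1 != B2, v \in B1 & v \in B2]
  /\ dissociation (gm g B1 B2) D.

Lemma no_new_diss B1 B2 : (forall d y, d \in D -> y \in D -> gm g B1 B2 d y -> g d y) ->
  dissociation (gm g B1 B2) D.
Proof.
move=> H; apply: diss_of => x y z xD yD zD gxy gxz.
by apply: (diss_le1 dD xD yD zD); apply: H.
Qed.

Lemma case_ii' B1 B2 v : block g B1 -> block g B2 -> B1 != B2 -> v \in B1 -> v \in B2 -> v \in D -> good.
Proof.
move=> bB1 bB2 nB vB1 vB2 vD; exists B1, B2, v; split => //.
apply: no_new_diss => d y dD' yD gdy; apply/negPn/negP => ngdy.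
have cr (X Y : {set T}) : block g X -> block g Y -> v \in X -> v \in Y ->
    d \in X -> d \notin Y -> y \in Y -> y \notin X -> False.
  move=> bX bY vX vY dX dY yY yX.
  have gvd : g v d by apply: (clique hb bX) => //; apply: contraNneq dY => <-.
  have gvy : g v y by apply: (clique hb bY) => //; apply: contraNneq yX => <-.
  have := diss_le1 dD vD dD' yD gvd gvy => E.
  by move: dY; rewrite E yY.
case: (new_edge hb bB1 bB2 gdy ngdy) => [[d1 d2 y2 y1]|[d2 d1 y1 y2]].
  exact: (cr B1 B2).
exact: (cr B2 B1).
Qed.


Lemma case_i B : #|D| = diss_number g -> block g B -> #|B :&: D| = 0 -> good.
Proof.
move=> cD bB /eqP; rewrite cards_eq0 => /eqP BD.
have nBD z : z \in B -> z \notin D.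
  move=> zB; apply/negP => zD.
  have : z \in B :&: D by rewrite inE zB zD.
  by rewrite BD inE.
have [b0 b0B] : exists b0, b0 \in B by apply/card_gt0P; case: bB => [[]].
have [d0 d0D] := diss_ge1 b0 cD.
have /connectP [p pp lp] := hb.1 b0 d0 (in_setT _) (in_setT _).
have b0K : b0 \notin ~: B by rewrite inE b0B.
have lK : last b0 p \in ~: B.
  by rewrite -lp inE; apply: contraNN (nBD d0) _; rewrite d0D.
have [x [c [cK _ xK _ gxc]]] := extract (fun y z _ (h : g y z) => h) b0K pp lK.
have [B' [bB' xB' cB']] := edge_block gs gi gxc.
exists B, B', x; split.
  split => //; last by move: xK; rewrite inE negbK.
  by apply/eqP => E; move: cK; rewrite inE E cB'.
apply: no_new_diss => d y dD' yD gdy; apply/negPn/negP => ngdy.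
case: (new_edge hb bB bB' gdy ngdy) => [[d1 _ _ _]|[_ _ y1 _]].
  by move: (nBD d d1); rewrite dD'.
by move: (nBD y y1); rewrite yD.
Qed.


Lemma case_ii v : v \in D -> cut_vertex g v -> good.
Proof.
move=> vD cut.
have [a [b [aS bS nab]]] : exists a b, [/\ a \in [set: T] :\ v, b \in [set: T] :\ v &
    ~~ connect (induced g ([set: T] :\ v)) a b].
  apply: contrapT => H; apply: cut => a b aS bS; apply/negPn/negP => nab; apply: H.
  by exists a, b.
have eqS : ~: [set v] = [set: T] :\ v by apply/setP => z; rewrite !inE andbT.
have reach w : w \in [set: T] :\ v -> exists x, [/\ x \in [set: T] :\ v,
    connect (induced g ([set: T] :\ v)) w x & g x v].
  move=> wS; have /connectP [p pp lp] := hb.1 w v (in_setT _) (in_setT _).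
  have wK : w \notin [set v] by move: wS; rewrite !inE andbT.
  have lK : last w p \in [set v] by rewrite -lp inE.
  have [x [c [cK _ xK cwx gxc]]] := extract (fun y z _ (h : g y z) => h) wK pp lK.
  move: cK gxc; rewrite inE => /eqP -> gxv.
  by exists x; split => //; [rewrite -eqS inE | rewrite -eqS].
have [xa [xaS axa gxa]] := reach a aS.
have [xb [xbS bxb gxb]] := reach b bS.
have [Ba [bBa xaB vBa]] := edge_block gs gi gxa.
have [Bb [bBb xbB vBb]] := edge_block gs gi gxb.
have [E|nE] := eqVneq Ba Bb; last exact: (case_ii' bBa bBb nE vBa vBb vD).
exfalso; move/negP: nab; apply.
apply: connect_trans axa _; apply: connect_trans (conn_sym gs bxb).
have [->|nx] := eqVneq xa xb; first exact: connect0.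
apply: connect1; rewrite /induced xaS xbS /=.
by apply: (clique hb bBa) => //; rewrite E.
Qed.


Lemma case_iii B1 B2 : adjacent_blocks g B1 B2 -> #|B1 :&: D| = 1 -> #|B2 :&: D| = 1 -> good.
Proof.
case=> bB1 bB2 nB [v [vB1 vB2 _]] /eqP /cards1P [a Ea] /eqP /cards1P [b Eb].
case vD: (v \in D); first exact: (case_ii' bB1 bB2 nB vB1 vB2 vD).
have aE z : (z \in B1) && (z \in D) = (z == a).
  by have := f_equal (fun S : {set T} => z \in S) Ea; rewrite !inE.
have bE z : (z \in B2) && (z \in D) = (z == b).
  by have := f_equal (fun S : {set T} => z \in S) Eb; rewrite !inE.
have /andP [aIn1 aD] : (a \in B1) && (a \in D) by rewrite aE.
have /andP [bIn2 bD] : (b \in B2) && (b \in D) by rewrite bE.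
case: (pselect (exists B', [/\ block g B', B1 != B' & a \in B'])).
  by move=> [B' [bB' nB' aB']]; exact: (case_ii' bB1 bB' nB' aIn1 aB' aD).
move=> Ha.
case: (pselect (exists B', [/\ block g B', B2 != B' & b \in B'])).
  by move=> [B' [bB' nB' bB'']]; exact: (case_ii' bB2 bB' nB' bIn2 bB'' bD).
move=> Hb.
have aNot2 : a \notin B2 by apply/negP => aB2; apply: Ha; exists B2.
have bNot1 : b \notin B1.
  by apply/negP => bB1'; apply: Hb; exists B1; split => //; rewrite eq_sym.
have noD (x : T) (X : {set T}) : block g X -> x \in X -> 
    ~ (exists B', [/\ block g B', X != B' & x \in B']) ->
    (forall z, (z \in X) && (z \in D) = (z == x)) -> forall z, z \in D -> ~~ g x z.
  move=> bX xX Hx xE z zD; apply/negP => gxz.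
  have [B' [bB' xB' zB']] := edge_block gs gi gxz.
  have E : X = B' by apply: contrapT => nE; apply: Hx; exists B'; split => //; apply/eqP.
  have : (z \in X) && (z \in D) by rewrite E zB' zD.
  by rewrite xE => /eqP zx; move: gxz; rewrite zx gi.
have noDa := noD a B1 bB1 aIn1 Ha aE.
have noDb := noD b B2 bB2 bIn2 Hb bE.
exists B1, B2, v; split => //.
have key d y : d \in D -> y \in D -> gm g B1 B2 d y -> ~~ g d y ->
    (d = a /\ y = b) \/ (d = b /\ y = a).
  move=> dD' yD gdy ngdy.
  case: (new_edge hb bB1 bB2 gdy ngdy) => [[d1 _ y2 _]|[d2 _ y1 _]].
    by left; split; apply/eqP; [rewrite -aE d1 | rewrite -bE y2].
  by right; split; apply/eqP; [rewrite -bE d2 | rewrite -aE y1].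
have ab : a != b by apply: contraNneq aNot2 => ->.
have part d y : d \in D -> y \in D -> gm g B1 B2 d y ->
    (d = a -> y = b) /\ (d = b -> y = a) /\ (d != a -> d != b -> g d y).
  move=> dD' yD gdy; case gd: (g d y).
    split; first by move=> da; move: gd; rewrite da (negbTE (noDa y yD)).
    by split => // db; move: gd; rewrite db (negbTE (noDb y yD)).
  case: (key d y dD' yD gdy (negbT gd)) => [[-> ->]|[-> ->]].
    by split => //; split => [->//|]; rewrite eqxx.
  by split => [->//|]; split => //; rewrite eqxx.
apply: diss_of => x y z xD yD zD gxy gxz.
have [py1 [py2 py3]] := part x y xD yD gxy.
have [pz1 [pz2 pz3]] := part x z xD zD gxz.
have [xa|nxa] := eqVneq x a; first by rewrite py1 // pz1.
have [xb|nxb] := eqVneq x b; first by rewrite py2 // pz2.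
exact: (diss_le1 dD xD yD zD (py3 nxa nxb) (pz3 nxa nxb)).
Qed.

End Cases.

From mathcomp Require Import boolp classical_sets reals.
From mathcomp Require Import topology normedtype derive.
From mathcomp Require Import ring lra.
Import Order.TTheory GRing.Theory Num.Theory.
Import numFieldNormedType.Exports.

Module SpecPart.
Local Open Scope classical_set_scope.
Local Open Scope ring_scope.

Section Spec.
Variable R : realType.
Variable n : nat.
Variable A : 'M[R]_n.
Hypothesis Asym : A^T = A.

Definition dot (u v : 'rV[R]_n) : R := (u *m v^T) 0 0.
Lemma dotE u v : dot u v = \sum_i u 0 i * v 0 i.
Proof. by rewrite /dot mxE; apply: eq_bigr => i _; rewrite mxE. Qed.
Lemma dotC u v : dot u v = dot v u.
Proof. by rewrite !dotE; apply: eq_bigr => i _; rewrite mulrC. Qed.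
Lemma dotDl u v w : dot (u + v) w = dot u w + dot v w.
Proof. by rewrite /dot mulmxDl mxE. Qed.
Lemma dotZl a u w : dot (a *: u) w = a * dot u w.
Proof. by rewrite /dot -scalemxAl mxE. Qed.
Lemma dotDr u v w : dot w (u + v) = dot w u + dot w v.
Proof. by rewrite dotC dotDl !(dotC w). Qed.
Lemma dotZr a u w : dot w (a *: u) = a * dot w u.
Proof. by rewrite dotC dotZl dotC. Qed.
Lemma dot_ge0 u : 0 <= dot u u.
Proof. by rewrite dotE; apply: sumr_ge0 => i _; rewrite -expr2 sqr_ge0. Qed.
Lemma dot_eq0 u : dot u u = 0 -> u = 0.
Proof.
rewrite dotE => /eqP; rewrite psumr_eq0 => [/allP H|i _]; last by rewrite -expr2 sqr_ge0.
apply/rowP => i; rewrite mxE; apply/eqP; rewrite -sqrf_eq0 expr2.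
by apply: (H i); rewrite mem_index_enum.
Qed.

Definition q x := dot (x *m A) x.
Lemma dotA u v : dot (u *m A) v = dot (v *m A) u.
Proof.
have H (M : 'M[R]_1) : M 0 0 = M^T 0 0 by rewrite mxE.
by rewrite /dot H !trmx_mul trmxK Asym mulmxA.
Qed.
Lemma q_exp y z t : q (y + t *: z) = q y + 2%:R * t * dot (y *m A) z + t ^+ 2 * q z.
Proof.
rewrite /q mulmxDl -scalemxAl dotDl !dotDr !dotZl !dotZr (dotA z y).
by rewrite expr2; ring.
Qed.
End Spec.

Section Spec2.
Variable R : realType.
Variable n : nat.
Variable A : 'M[R]_n.
Hypothesis Asym : A^T = A.

Lemma dot_exp (y z : 'rV[R]_n) t : dot (y + t *: z) (y + t *: z) = dot y y + 2%:R * t * dot y z + t ^+ 2 * dot z z.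
Proof. by rewrite !dotDl !dotDr !dotZl !dotZr (dotC z y) expr2; ring. Qed.

Lemma dotNl (u w : 'rV[R]_n) : dot (- u) w = - dot u w.
Proof. by rewrite /dot mulNmx mxE. Qed.

Lemma qZ a z : q A (a *: z) = a ^+ 2 * q A z.
Proof. by rewrite /q -scalemxAl dotZl dotZr expr2 mulrA. Qed.

Lemma q_cont : continuous (q A).
Proof.
have -> : q A = fun x => \sum_i (\sum_j x 0 j * A j i) * x 0 i.
  by apply: funext => x; rewrite /q dotE; apply: eq_bigr => i _; rewrite mxE.
apply: continuous_big; first exact: add_continuous.
move=> i _ x; apply: continuousM; last exact: coord_continuous.
apply: (continuous_big (P := xpredT)); first exact: add_continuous.
move=> j _ y; apply: continuousM; first exact: coord_continuous.
exact: cst_continuous.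
Qed.

Lemma dot_cont : continuous (fun x : 'rV[R]_n => dot x x).
Proof.
have -> : (fun x : 'rV[R]_n => dot x x) = fun x => \sum_i x 0 i * x 0 i.
  by apply: funext => x; rewrite dotE.
apply: continuous_big; first exact: add_continuous.
by move=> i _ x; apply: continuousM; exact: coord_continuous.
Qed.

Definition sph := [set x : 'rV[R]_n | dot x x = 1].

Lemma sph_compact : compact sph.
Proof.
apply: (@subclosed_compact _ _ [set v : 'rV[R]_n | forall i, `[-1, 1]%classic (v ord0 i)]).
- apply: (@preimage_closed _ _ (fun x : 'rV[R]_n => dot x x) [set x | x = 1]).
    by move=> x _; apply: dot_cont.
  exact: closed_eq.
- apply: (@rV_compact _ _ (fun=> `[(-1 : R), 1]%classic)) => _; exact: segment_compact.
- move=> x /= Hx i; rewrite in_itv /= -ler_norml.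
  have : x 0 i ^+ 2 <= 1.
    rewrite -Hx dotE (bigD1 i) //= -expr2 lerDl; apply: sumr_ge0 => j _.
    by rewrite -expr2 sqr_ge0.
  by rewrite -{1}(expr1n _ 2) -real_normK ?num_real // ler_pXn2r ?nnegrE ?normr_ge0 //; rewrite ger0_norm ?ler01.
Qed.


Lemma q_le_max (y : 'rV[R]_n) : dot y y = 1 -> (forall t, dot t t = 1 -> q A t <= q A y) ->
  forall z, q A z <= q A y * dot z z.
Proof.
move=> y1 ymax z.
have [->|z0] := eqVneq z 0.
  by rewrite /q mul0mx /dot !mul0mx !mxE mulr0.
have dz : 0 < dot z z.
  by rewrite lt_def dot_ge0 andbT; apply: contra z0 => /eqP /dot_eq0 ->.
set c := Num.sqrt (dot z z).
have c0 : 0 < c by rewrite sqrtr_gt0.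
have cc : c ^+ 2 = dot z z by rewrite sqr_sqrtr // ltW.
have := ymax (c^-1 *: z).
rewrite dotZl dotZr qZ -cc mulrA -expr2 exprVn mulVf ?expf_neq0 ?gt_eqF //.
move=> /(_ erefl) h.
have c2 : 0 < c ^+ 2 by rewrite exprn_gt0.
have := h; rewrite mulrC ler_pdivrMr //.
Qed.

Lemma eq_eig (mu : R) z : (forall t, q A t <= mu * dot t t) -> q A z = mu * dot z z ->
  z *m A = mu *: z.
Proof.
move=> H qz.
set w := z *m A - mu *: z.
have cdef : dot (z *m A) w - mu * dot z w = dot w w.
  have g u : dot (z *m A) u - mu * dot z u = dot (z *m A - mu *: z) u.
    by rewrite dotDl dotNl dotZl.
  exact: g.
have hd : q A w - mu * dot w w <= 0 by rewrite subr_le0.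
have ht t : 2%:R * t * dot w w + t ^+ 2 * (q A w - mu * dot w w) <= 0.
  have := H (z + t *: w); rewrite q_exp // dot_exp qz -cdef.
  move=> h; rewrite -subr_ge0 in h; rewrite -oppr_ge0.
  apply: le_trans h _; rewrite le_eqVlt; apply/orP; left; apply/eqP.
  ring.
suff : dot w w = 0.
  by move=> /dot_eq0 /eqP; rewrite subr_eq0 => /eqP.
apply/eqP; rewrite eq_le dot_ge0 andbT; rewrite leNgt; apply/negP => cpos.
set c := dot w w in cpos ht; set d := q A w - mu * dot w w in hd ht.
have e0 : 0 < 1 - d by rewrite subr_gt0 (le_lt_trans hd) ?ltr01.
have := ht (c / (1 - d)).
have -> : 2%:R * (c / (1 - d)) * c + (c / (1 - d)) ^+ 2 * d
        = (c ^+ 2 / (1 - d) ^+ 2) * (2%:R - d).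
  by field; rewrite gt_eqF.
rewrite pmulr_rle0 ?subr_gt0; last first.
  by apply: divr_gt0; apply: exprn_gt0.
by move=> h; have : (0:R) < 2 by []; lra.
Qed.


Lemma top_eig : (0 < n)%N -> exists mu (y : 'rV[R]_n),
  [/\ dot y y = 1, y *m A = mu *: y, (forall z, q A z <= mu * dot z z) &
      sup [set l | eigenvalue A l] = mu].
Proof.
move=> n0; pose i0 := Ordinal n0.
have ne : sph !=set0.
  exists (\row_j (j == i0)%:R); rewrite /sph /= dotE (bigD1 i0) //= big1.
    by rewrite !mxE eqxx mulr1 addr0.
  by move=> i /negbTE hi; rewrite !mxE hi mulr0.
have [y ysph ymax] := EVT_max_rV ne sph_compact (continuous_subspaceT q_cont).
have y1 : dot y y = 1 by move: ysph; rewrite inE.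
have Hle := q_le_max y1 (fun t t1 => ymax t (mem_set t1)).
set mu := q A y.
have yeig : y *m A = mu *: y.
  by apply: eq_eig => //; rewrite y1 mulr1.
exists mu, y; split => //.
have ev : eigenvalue A mu.
  apply/eigenvalueP; exists y => //; apply: contraPneq y1 => ->.
  by rewrite /dot mul0mx mxE => /eqP; rewrite eq_sym oner_eq0.
apply/eqP; rewrite eq_le; apply/andP; split.
  apply: ge_sup; first by exists mu.
  move=> l /= /eigenvalueP [v vl v0].
  have dv : 0 < dot v v.
    by rewrite lt_def dot_ge0 andbT; apply: contra v0 => /eqP /dot_eq0 ->.
  have := Hle v; rewrite /q vl dotZl -ler_pdivlMr // mulfK ?gt_eqF //; exact.
have hs : has_sup [set l | eigenvalue A l].
  split; first by exists mu.
  exists mu => l /= /eigenvalueP [v vl v0].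
  have dv : 0 < dot v v.
    by rewrite lt_def dot_ge0 andbT; apply: contra v0 => /eqP /dot_eq0 ->.
  have := Hle v; rewrite /q vl dotZl -ler_pdivlMr // mulfK ?gt_eqF //; exact.
exact: (sup_upper_bound hs).
Qed.

End Spec2.

Section Perron.
Variable R : realType.
Variable T : finType.

Lemma qE n (A : 'M[R]_n) x : q A x = \sum_i \sum_j x 0 j * A j i * x 0 i.
Proof.
rewrite /q dotE; apply: eq_bigr => i _; rewrite mxE big_distrl /=.
by [].
Qed.

Lemma adj_sym (g : rel T) : symmetric g -> (adj_mx R g)^T = adj_mx R g.
Proof. by move=> gs; apply/matrixP => i j; rewrite !mxE gs. Qed.

Lemma adj_ge0 (g : rel T) i j : 0 <= adj_mx R g i j.
Proof. by rewrite mxE ler0n. Qed.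

Lemma spec_lt (g g' : rel T) : symmetric g -> symmetric g' ->
  (forall x y, g x y -> g' x y) -> connected_graph g ->
  (exists x y, g' x y && ~~ g x y) -> spec_rad R g < spec_rad R g'.
Proof.
move=> gs gs' sub gc [a [b /andP [gab ngab]]].
have n0 : (0 < #|T|)%N by apply/card_gt0P; exists a.
have [mu [y [y1 yeig yle smu]]] := top_eig (adj_sym gs) n0.
have [mu' [y2 [_ _ yle' smu']]] := top_eig (adj_sym gs') n0.
rewrite /spec_rad smu smu'.
set A := adj_mx R g; set A' := adj_mx R g'.
pose z := \row_i `|y 0 i|.
have z1 : dot z z = 1.
  by rewrite -y1 !dotE; apply: eq_bigr => i _; rewrite mxE -normrM ger0_norm // -expr2 sqr_ge0.
have qy : q A y = mu by rewrite /q yeig dotZl y1 mulr1.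
have qz : mu <= q A z.
  rewrite -qy !qE; apply: le_trans (ler_norm _) _.
  apply: le_trans (ler_norm_sum _ _ _) _; apply: ler_sum => i _.
  apply: le_trans (ler_norm_sum _ _ _) _; apply: ler_sum => j _.
  by rewrite !normrM !mxE normr_nat.
have qz' : q A z = mu * dot z z.
  by apply/eqP; rewrite eq_le yle /= z1 mulr1 qz.
have zeig := eq_eig (adj_sym gs) yle qz'.
have zpos : forall v, 0 < z 0 (enum_rank v).
  have zge0 i : 0 <= z 0 i by rewrite mxE.
  have zero_closed u w : z 0 (enum_rank u) = 0 -> g u w -> z 0 (enum_rank w) = 0.
    move=> zu guw.
    have : (z *m A) 0 (enum_rank u) = 0 by rewrite zeig mxE zu mulr0.
    rewrite mxE => /eqP; rewrite psumr_eq0; last first.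
      by move=> j _; rewrite mulr_ge0 // adj_ge0.
    move=> /allP /(_ (enum_rank w) (mem_index_enum _)).
    by rewrite /= /A /adj_mx !mxE !enum_rankK gs guw mulr1 => /eqP.
  move=> v; rewrite lt_def zge0 andbT; apply/negP => /eqP zv.
  have allz : forall w, z 0 (enum_rank w) = 0.
    move=> w; have := gc v w (finset.in_setT _) (finset.in_setT _).
    move=> /connectP [p pp ->]; elim: p v zv pp => //= x p IH v zv /andP [hvx pp].
    apply: (IH x) => //; apply: (zero_closed v) => //.
    by move: hvx; rewrite /induced => /and3P [].
  have : dot z z = 0.
    rewrite dotE big1 // => i _; have := allz (enum_val i).
    by rewrite enum_valK => ->; rewrite mulr0.
  by rewrite z1 => /eqP; rewrite oner_eq0.
have : q A z < q A' z.
  rewrite !qE -subr_gt0 -sumrB.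
  rewrite (bigD1 (enum_rank b)) //= -sumrB (bigD1 (enum_rank a)) //=.
  have tge0 i j : 0 <= z 0 j * A' j i * z 0 i - z 0 j * A j i * z 0 i.
    rewrite subr_ge0 ler_pM2r ?(ltW (zpos _)) //; last first.
      by rewrite -[i]enum_valK; exact: zpos.
    rewrite ler_pM2l; last by rewrite -[j]enum_valK; exact: zpos.
    rewrite /A /A' /adj_mx !mxE ler_nat.
    by case: (g _ _) (sub (enum_val j) (enum_val i)) => // /(_ isT) ->.
  rewrite -addrA; apply: ltr_wpDr; last first.
    rewrite /A /A' /adj_mx !mxE !enum_rankK gab (negbTE ngab) mulr1 mulr0 mul0r subr0.
    by move: (zpos a) (zpos b); rewrite !mxE; exact: mulr_gt0.
  apply: addr_ge0; first by apply: sumr_ge0 => j _; exact: tge0.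
  by apply: sumr_ge0 => i _; rewrite -sumrB; apply: sumr_ge0 => j _; exact: tge0.
have := yle' z; rewrite z1 mulr1 => h1 h2.
by apply: le_lt_trans qz _; apply: lt_le_trans h2 h1.
Qed.

End Perron.

End SpecPart.
Import SpecPart.

Theorem proposition2p1 (R : realType) (k phi : nat) (g : rel 'I_k) (D : {set 'I_k}) :
  Bl phi g -> max_dissociation_set g D ->
  ((exists B : {set 'I_k}, block g B /\ #|B :&: D| = 0%N) \/
   (exists v : 'I_k, v \in D /\ cut_vertex g v) \/
   (exists B1 B2 : {set 'I_k}, adjacent_blocks g B1 B2 /\
      #|B1 :&: D| = 1%N /\ #|B2 :&: D| = 1%N)) ->
  ~ max_spectral_in_Bl R phi g.
Proof.
move=> [[gi gs] hb dn] [dD cD] H [_ maxg].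
have G : good g D.
  case: H => [[B [bB B0]]|[[v [vD cut]]|[B1 [B2 [adj [c1 c2]]]]]].
  - exact: (case_i gs gi hb dD cD bB B0).
  - exact: (case_ii gs gi hb dD vD cut).
  - exact: (case_iii gs gi hb dD adj c1 c2).
move: G => [B1 [B2 [v [[bB1 bB2 nB vB1 vB2] dD']]]].
have [gi' gs'] := gm_simple gs gi B1 B2.
have Bl' : Bl phi (gm g B1 B2).
  split; first exact: gm_simple.
    exact: (gm_block gs hb bB1 bB2 vB1 vB2).
  by rewrite (diss_num_eq (@gm_sub _ g B1 B2) dD' cD).
have lt := spec_lt R gs gs' (@gm_sub _ g B1 B2) hb.1 (gm_strict gs hb bB1 bB2 nB vB1 vB2).
by have := maxg _ Bl'; rewrite leNgt lt.
Qed.
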